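(* Let $L$ and $L'$ be isomorphic intersection lattices such that $L'$ is full and $\hat 1_{L'}\in\bullet(\mathrm{nci}(L'))$. Then $\hat 1_L\in\bullet(\mathrm{nci}(L))$.
   Context: A finite family $\mathcal{F}$ of sets is non-trivial if it is non-empty and no $X\in\mathcal{F}$ satisfies $X=\bigcup\mathcal{F}$. For such $\mathcal{F}$ and non-empty $\mathcal{T}\subseteq\mathcal{F}$, let $S_{\mathcal{T}}=\bigcap\mathcal{T}$, and let $S_\emptyset=\bigcup\mathcal{F}$. The intersection lattice of $\mathcal{F}$ is $\mathbb{L}_{\mathcal{F}}=(\{S_{\mathcal{T}}\mid\mathcal{T}\subseteq\mathcal{F}\},\subseteq)$, with greatest element $\hat 1=\bigcup\mathcal{F}$; an intersection lattice is one of this form. For $L=\mathbb{L}_{\mathcal{F}}$ and $x\in\hat 1$, let $\min_L(x)=S_{\{X\in\mathcal{F}\mid x\in X\}}$. $L$ is full if for every $U\in L$ with $U\neq\hat 1$ there exists $x\in\hat 1$ with $\min_L(x)=U$. The Möbius function of a finite poset $P$ is defined for $x\le y$ by $\mu_P(y,y)=1$ and $\mu_P(x,y)=-\sum_{x<z\le y}\mu_P(z,y)$. The non-cancelling intersections are $\mathrm{nci}(L)=\{U\in L\mid U\neq\hat 1,\ \mu_L(U,\hat 1)\neq 0\}$. For sets $A,B$, $A\,\dot\cup\,B=A\cup B$ is defined only when $A\cap B=\emptyset$, and $A\,\dot\setminus\,B=A\setminus B$ is defined only when $B\subseteq A$. For a finite family $\mathcal{G}$ of sets, $\bullet(\mathcal{G})$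 is the smallest family of sets containing $\emptyset$ and every member of $\mathcal{G}$ and closed under all well-defined disjoint unions and subset complements. *)

(* Defs.v *)
From HB Require Import structures.
From mathcomp Require Import all_boot all_order all_algebra finmap.
From mathcomp Require Import boolp classical_sets functions cardinality fsbigop.

Set Implicit Arguments.
Unset Strict Implicit.
Unset Printing Implicit Defensive.

Import Order.TTheory GRing.Theory Num.Theory.
Local Open Scope classical_set_scope.
Local Open Scope ring_scope.

Section IntersectionLattices.
Variable T : Type.
Implicit Types (F G Tc L : set (set T)) (U V X : set T).

Definition nontrivial F : Prop :=
  finite_set F /\ F !=set0 /\ ~ (exists2 X, F X & X = \bigcup_(Y in F) Y).

Definition hat1 F : set T := \bigcup_(Y in F) Y.

Definition Sfam F Tc : set T :=
  if pselect (Tc = set0) then hat1 F else \bigcap_(X in Tc) X.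

(* the intersection lattice L_F (as the set of its elements, ordered by inclusion) *)
Definition ilat F : set (set T) := [set U | exists2 Tc, Tc `<=` F & U = Sfam F Tc].

Definition minL F (x : T) : set T := Sfam F [set X | F X /\ X x].

Definition full F : Prop :=
  forall U, ilat F U -> U <> hat1 F -> exists2 x, hat1 F x & minL F x = U.

(* Moebius function of a finite poset P of sets (ordered by inclusion), computed
   by its defining recursion mu(y,y) = 1, mu(x,y) = - sum_{x < z <= y} mu(z,y),
   with a fuel argument; fuel #|P|.+1 is more than the length of any chain. *)
Fixpoint mob_fuel (P : set (set T)) (n : nat) (x y : set T) : int :=
  if pselect (x = y) then 1 else
  match n with
  | 0 => 0
  | n'.+1 => - \sum_(z \in [set z | P z /\ x `<` z /\ z `<=` y]) mob_fuel P n' z y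
  end.

Definition moebius (P : set (set T)) (x y : set T) : int :=
  mob_fuel P (#|` fset_set P|).+1 x y.

Definition nci F : set (set T) :=
  [set U | ilat F U /\ U <> hat1 F /\ moebius (ilat F) U (hat1 F) <> 0].

Inductive bullet G : set T -> Prop :=
  | bullet0 : bullet G set0
  | bulletG X : G X -> bullet G X
  | bulletU A B : bullet G A -> bullet G B -> A `&` B = set0 -> bullet G (A `|` B)
  | bulletD A B : bullet G A -> bullet G B -> B `<=` A -> bullet G (A `\` B).

End IntersectionLattices.

Definition lat_iso (T T' : Type) (L : set (set T)) (L' : set (set T')) : Prop :=
  exists f : set T -> set T',
    [/\ forall U, L U -> L' (f U),
        forall V, L' V -> exists2 U, L U & f U = V,
        forall U V, L U -> L V -> f U = f V -> U = V &
        forall U V, L U -> L V -> (U `<=` V <-> f U `<=` f V)].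

(* Main.v *)
Require Import Defs.
From HB Require Import structures.
From mathcomp Require Import all_boot all_order all_algebra finmap.
From mathcomp Require Import boolp classical_sets functions cardinality fsbigop.

Set Implicit Arguments.
Unset Strict Implicit.
Unset Printing Implicit Defensive.
Local Open Scope classical_set_scope.

Section Gen.
Variable T : Type.
Implicit Types (F Tc : set (set T)) (U : set T).

Lemma Sfam0 F Tc : Tc = set0 -> Sfam F Tc = hat1 F.
Proof. by rewrite /Sfam; case: pselect. Qed.
Lemma SfamN F Tc : Tc <> set0 -> Sfam F Tc = \bigcap_(X in Tc) X.
Proof. by rewrite /Sfam; case: pselect. Qed.

Lemma ilat_sub F U : ilat F U -> U `<=` hat1 F.
Proof.
case=> Tc TcF ->; have [E|H] := pselect (Tc = set0); first by rewrite Sfam0.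
rewrite SfamN //; have [X TX] : Tc !=set0 by apply/set0P/eqP.
move=> x /(_ X TX) Xx; exists X => //; exact: TcF.
Qed.

Lemma hat1_ilat F : ilat F (hat1 F).
Proof. by exists set0 => //; rewrite Sfam0. Qed.

Lemma minL_ilat F x : ilat F (minL F x).
Proof. by exists [set X | F X /\ X x] => // X []. Qed.

Lemma minL_self F x : hat1 F x -> minL F x x.
Proof.
case=> X FX Xx; rewrite /minL SfamN; first by move=> Y [].
by move/seteqP => [sub _]; case: (sub X (conj FX Xx)).
Qed.

Lemma minL_sub F U x : ilat F U -> U x -> minL F x `<=` U.
Proof.
move=> LU; have := ilat_sub LU; case: LU => Tc TcF -> sub Ux.
have [E|H] := pselect (Tc = set0).
  rewrite Sfam0 //; exact/(ilat_sub (minL_ilat F x)).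
have [X TX] : Tc !=set0 by apply/set0P/eqP.
rewrite SfamN // in Ux *.
rewrite /minL SfamN; last first.
  by move/seteqP => [sub' _]; case: (sub' X (conj (TcF X TX) (Ux X TX))).
by move=> y Hy Y TY; apply: Hy; split; [apply: TcF|apply: Ux].
Qed.

Lemma minL_neq F x : nontrivial F -> hat1 F x -> minL F x <> hat1 F.
Proof.
move=> [_ [_ ntr]] hx E; have [X FX Xx] := hx; apply: ntr; exists X => //.
apply/seteqP; split; first by move=> y Xy; exists X.
rewrite -/(hat1 F) -E /minL SfamN; first by move=> y H; apply: H.
by move/seteqP => [sub _]; case: (sub X (conj FX Xx)).
Qed.

End Gen.

Lemma card_img (X Y : choiceType) (A : set X) (g : X -> Y) :
  {in A &, injective g} -> #|` fset_set (g @` A)| = #|` fset_set A|.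
Proof.
move=> gi; have [finA|finA] := pselect (finite_set A).
  rewrite fset_set_image // card_in_imfset //= => a b.
  by move=> Aa Ab; apply: gi; rewrite -(in_fset_set finA).
have finB : ~ finite_set (g @` A) by rewrite (eq_finite_set (inj_card_eq gi)).
by rewrite /fset_set; case: pselect => //; case: pselect.
Qed.

Section Iso.
Variables (T T' : Type) (F : set (set T)) (F' : set (set T')) (f : set T -> set T').
Hypotheses (fS : forall U, ilat F U -> ilat F' (f U))
  (fsurj : forall V, ilat F' V -> exists2 U, ilat F U & f U = V)
  (finj : forall U V, ilat F U -> ilat F V -> f U = f V -> U = V)
  (fmono : forall U V, ilat F U -> ilat F V -> (U `<=` V <-> f U `<=` f V)).

Lemma f_hat1 : f (hat1 F) = hat1 F'.
Proof.
apply/seteqP; split; first exact: ilat_sub (fS (hat1_ilat F)).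
move=> y hy; have [U LU fU] := fsurj (hat1_ilat F'); rewrite -fU in hy.
exact: (fmono LU (hat1_ilat F)).1 (ilat_sub LU) _ hy.
Qed.

Lemma f_proper U V : ilat F U -> ilat F V -> (U `<` V <-> f U `<` f V).
Proof.
move=> LU LV; split=> -[s ns]; split.
- exact/(fmono LU LV).
- by move=> H; apply: ns; apply/(fmono LV LU).
- exact/(fmono LU LV).
- by move=> H; apply: ns; apply/(fmono LV LU).
Qed.

Lemma ilat_img : ilat F' = f @` ilat F.
Proof.
apply/seteqP; split; first by move=> V /fsurj[U LU <-]; exists U.
by move=> V [U LU <-]; apply: fS.
Qed.

Lemma mob_iso n U V : ilat F U -> ilat F V ->
  mob_fuel (ilat F) n U V = mob_fuel (ilat F') n (f U) (f V).
Proof.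
elim: n U => [|n IH] U LU LV /=.
  case: pselect => E; case: pselect => E' //; first by case: E'; rewrite E.
  by case: E; apply: finj.
case: pselect => E; case: pselect => E' //; first by case: E'; rewrite E.
  by case: E; apply: finj.
congr (GRing.opp _).
rewrite (reindex_fsbig f [set z | ilat F z /\ U `<` z /\ z `<=` V]).
  apply: eq_fsbigr => z; rewrite inE => -[Lz _]; exact: IH.
split.
- move=> z [Lz [Uz zV]]; split; first exact: fS.
  by split; [apply/f_proper | apply/(fmono Lz LV)].
- move=> a b; rewrite !inE => -[La _] [Lb _]; exact: finj.
- move=> z' [Lz' [Uz' z'V]]; have [z Lz fz] := fsurj Lz'; exists z => //.
  rewrite -fz in Uz' z'V; split=> //.
  by split; [apply/(f_proper LU Lz) | apply/(fmono Lz LV)].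
Qed.

Lemma moebius_iso U V : ilat F U -> ilat F V ->
  moebius (ilat F) U V = moebius (ilat F') (f U) (f V).
Proof.
move=> LU LV; rewrite /moebius ilat_img card_img; last first.
  by move=> a b; rewrite !inE; apply: finj.
rewrite -ilat_img; exact: mob_iso.
Qed.

Lemma nci_iso U' : nci F' U' -> exists2 U, nci F U & f U = U'.
Proof.
move=> [LU' [ne mo]]; have [U LU fU] := fsurj LU'; exists U => //.
split=> //; split.
  by move=> E; apply: ne; rewrite -fU E f_hat1.
by rewrite (moebius_iso LU (hat1_ilat F)) fU f_hat1.
Qed.

End Iso.

Theorem lemma4p4 (T T' : Type) (F : set (set T)) (F' : set (set T')) :
  nontrivial F -> nontrivial F' ->
  lat_iso (ilat F) (ilat F') ->
  full F' ->
  bullet (nci F') (hat1 F') ->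
  bullet (nci F) (hat1 F).
Proof.
move=> ntF ntF' [f [fS fsurj finj fmono]] fullF' hb.
have fh := f_hat1 fS fsurj fmono.
have NI := nci_iso fS fsurj finj fmono.
have pt x : hat1 F x -> exists2 y, hat1 F' y & minL F' y = f (minL F x).
  move=> hx; apply: fullF'; first exact/fS/minL_ilat.
  rewrite -fh => /finj; have := minL_neq ntF hx.
  by move=> ne E; apply: ne; apply: E; [apply: minL_ilat|apply: hat1_ilat].
pose psi (Y : set T') := [set x | hat1 F x /\ exists2 y, Y y & minL F' y = f (minL F x)].
have key : forall Y, bullet (nci F') Y -> [/\ Y `<=` hat1 F',
    (forall y y', Y y -> hat1 F' y' -> minL F' y' = minL F' y -> Y y') &
    bullet (nci F) (psi Y)].
  move=> Y; elim => {Y}.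
  - split=> //; have -> : psi set0 = set0.
      by apply/seteqP; split=> x // [_ [y]].
    exact: bullet0.
  - move=> X nX; have [LX _] := nX; split.
    + exact: ilat_sub.
    + move=> y y' Xy hy' E; apply: (minL_sub LX Xy); rewrite -E.
      exact: minL_self.
    + have [U nU fU] := NI _ nX; have [LU _] := nU.
      have -> : psi X = U; last exact: bulletG.
      apply/seteqP; split.
      * move=> x [hx [y Xy E]].
        suff S : minL F x `<=` U by apply: S (minL_self hx).
        apply: (fmono _ _ (minL_ilat F x) LU).2; rewrite fU -E.
        exact: minL_sub.
      * move=> x Ux; have hx := ilat_sub LU Ux; split=> //.
        have [y hy E] := pt x hx; exists y => //.
        have : minL F' y y by exact: minL_self.
        suff S : f (minL F x) `<=` X by rewrite E; apply: S.
        rewrite -fU; apply: (fmono _ _ (minL_ilat F x) LU).1.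
        exact: minL_sub.
  - move=> A B _ [sA satA bA] _ [sB satB bB] AB; split.
    + by move=> y [/sA|/sB].
    + move=> y y' [Ay|By] hy' E; [left; exact: satA E|right; exact: satB E].
    + have -> : psi (A `|` B) = psi A `|` psi B.
        apply/seteqP; split.
          by move=> x [hx [y [Ay|By] E]]; [left|right]; split=> //; exists y.
        move=> x [[hx [y Ay E]]|[hx [y By E]]].
          by split=> //; exists y => //; left.
        by split=> //; exists y => //; right.
      apply: bulletU => //; apply/seteqP; split=> // x [[hx [y Ay E]] [_ [y' By' E']]].
      have : (A `&` B) y; last by rewrite AB.
      split=> //; apply: (satB _ _ By' (sA _ Ay)); by rewrite E E'.
  - move=> A B _ [sA satA bA] _ [sB satB bB] BA; split.
    + by move=> y [/sA].
    + move=> y y' [Ay nBy] hy' E; split; first exact: satA E.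
      by move=> By'; apply: nBy; apply: (satB _ _ By' (sA _ Ay)).
    + have -> : psi (A `\` B) = psi A `\` psi B.
        apply/seteqP; split.
          move=> x [hx [y [Ay nBy] E]]; split; first by split=> //; exists y.
          move=> [_ [y' By' E']]; apply: nBy; apply: (satB _ _ By' (sA _ Ay)).
          by rewrite E E'.
        move=> x [[hx [y Ay E]] npB]; split=> //; exists y => //; split=> // By.
        by apply: npB; split=> //; exists y.
      apply: bulletD => // x [hx [y By E]]; split=> //; exists y => //.
      exact: BA.
have [_ _ b] := key _ hb.
have -> : hat1 F = psi (hat1 F') => //.
apply/seteqP; split; last by move=> x [].
by move=> x hx; split=> //; have [y hy E] := pt x hx; exists y.
Qed.
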